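(* Let $X,Y$ be $\mathfrak{Q}$-preordered $\mathfrak{Q}$-subsets and $f\colon\mathsf{P}X\to\mathsf{P}Y$ a $\mathfrak{Q}$-order-preserving map. The following are equivalent: (i) $f$ is a left adjoint in $\mathfrak{Q}\text{-}\mathbf{FOrd}$, i.e. there is a $\mathfrak{Q}$-order-preserving $g\colon\mathsf{P}Y\to\mathsf{P}X$ with $f\dashv g$ (a $\mathfrak{Q}$-axiality from $X$ to $Y$); (ii) $f$ is a left adjoint between the underlying preordered sets of $\mathsf{P}X$ and $\mathsf{P}Y$, and $f(u\circ\mu)=u\circ f\mu$ for all $\mu\in\mathsf{P}X$, $q\in\mathfrak{Q}$ and $u\in\mathcal{D}\mathfrak{Q}(|\mu|,q)$; (iii) $f$ is a left adjoint between the underlying preordered sets of $\mathsf{P}X$ and $\mathsf{P}Y$, and $f(u\circ\mathsf{y}_X x)=u\circ f\mathsf{y}_X x$ for all $x\in X$, $q\in\mathfrak{Q}$ and $u\in\mathcal{D}\mathfrak{Q}(|x|,q)$.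
   Context: $(\mathfrak{Q},\&,e)$ is a non-trivial unital quantale (complete lattice with associative multiplication with unit $e$ preserving joins in each variable, $\bot<e$), implications $p\& q\le r\iff p\le r/ q\iff q\le p\backslash r$, and $\mathcal{D}\mathfrak{Q}(p,q)=\{u\mid (u/ p)\& p=u=q\&(q\backslash u)\}$. A $\mathfrak{Q}$-subset is a set $X$ with $|\cdot|\colon X\to\mathfrak{Q}$; $\mathbf{1}_q$ is the singleton $\{*\}$ with $|*|=q$, and $u\in\mathcal{D}\mathfrak{Q}(p,q)$ is identified with the $\mathfrak{Q}$-relation from $\mathbf{1}_p$ to $\mathbf{1}_q$ with value $u$. A $\mathfrak{Q}$-relation from $X$ to $Y$ is a map $\phi\colon X\times Y\to\mathfrak{Q}$ with $\phi(x,y)\in\mathcal{D}\mathfrak{Q}(|x|,|y|)$, ordered pointwise; composition $(\psi\circ\phi)(x,z)=\bigvee_y(\psi(y,z)/|y|)\&\phi(x,y)$; $\xi\swarrow\phi$ is the largest $\psi'$ with $\psi'\circ\phi\le\xi$, and $\psi\searrow\xi$ the largest $\phi'$ with $\psi\circ\phi'\le\xi$. $\mathrm{id}_X(x,x)=|x|$, $\bot$ elsewhere. A $\mathfrak{Q}$-preordered $\mathfrak{Q}$-subset is a $\mathfrak{Q}$-subset $X$ with a $\mathfrak{Q}$-relation $1_X^{\natural}$ from $X$ to $X$ satisfying $\mathrm{id}_X\le 1_X^{\natural}$ and $1_X^{\natural}\circ 1_X^{\natural}\le 1_X^{\natural}$; its underlying preorder is $x\le y\iff |x|=|y|$ and $|x|\le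 1_X^{\natural}(x,y)$. A $\mathfrak{Q}$-order-preserving map $f\colon X\to Y$ satisfies $|fx|=|x|$ and $1_X^{\natural}(x,x')\le 1_Y^{\natural}(fx,fx')$; for such $f,g\colon X\to Y$, $f\le g$ means $|x|\le 1_Y^{\natural}(fx,gx)$ for all $x$. A $\mathfrak{Q}$-Galois connection $f\dashv g$ ($f\colon X\to Y$, $g\colon Y\to X$ $\mathfrak{Q}$-order-preserving) means $1_X\le gf$ and $fg\le 1_Y$; $\mathfrak{Q}\text{-}\mathbf{FOrd}$ is the category of $\mathfrak{Q}$-preordered $\mathfrak{Q}$-subsets and $\mathfrak{Q}$-order-preserving maps. The $\mathfrak{Q}$-powerset $\mathsf{P}X$ is the $\mathfrak{Q}$-subset of all potential lower $\mathfrak{Q}$-subsets, i.e. $\mathfrak{Q}$-relations $\mu$ from $X$ to some $\mathbf{1}_q$ with $\mu\circ 1_X^{\natural}\le\mu$, with $|\mu|=q$ and $\mathfrak{Q}$-preorder $1_{\mathsf{P}X}^{\natural}(\mu,\mu')=\mu'\swarrow\mu$. The Yoneda embedding $\mathsf{y}_X\colon X\to\mathsf{P}X$ sends $x$ to $1_X^{\natural}(-,x)$, a $\mathfrak{Q}$-relation from $X$ to $\mathbf{1}_{|x|}$. *)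

(* Defs.v *)
Set Implicit Arguments.
Unset Strict Implicit.

Record Quantale := {
  qcar :> Type;
  qle : qcar -> qcar -> Prop;
  qle_refl : forall a, qle a a;
  qle_trans : forall a b c, qle a b -> qle b c -> qle a c;
  qle_antisym : forall a b, qle a b -> qle b a -> a = b;
  qsup : (qcar -> Prop) -> qcar;
  qsup_ub : forall (S : qcar -> Prop) a, S a -> qle a (qsup S);
  qsup_least : forall (S : qcar -> Prop) b,
      (forall a, S a -> qle a b) -> qle (qsup S) b;
  qmul : qcar -> qcar -> qcar;
  qe : qcar;
  qmulA : forall a b c, qmul a (qmul b c) = qmul (qmul a b) c;
  qmul1l : forall a, qmul qe a = a;
  qmulr1 : forall a, qmul a qe = a;
  qmul_supl : forall (S : qcar -> Prop) b,
      qmul (qsup S) b = qsup (fun c => exists a, S a /\ c = qmul a b);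
  qmul_supr : forall a (S : qcar -> Prop),
      qmul a (qsup S) = qsup (fun c => exists b, S b /\ c = qmul a b);
  qnontrivial : qsup (fun _ => False) <> qe
}.

Section QDefs.
Variable Q : Quantale.

Definition qbot : Q := qsup (fun _ => False).

Definition qrdiv (r q : Q) : Q := qsup (fun p => qle (qmul p q) r).
Definition qldiv (p r : Q) : Q := qsup (fun q => qle (qmul p q) r).

Definition inDQ (u p q : Q) : Prop :=
  qmul (qrdiv u p) p = u /\ u = qmul q (qldiv q u).

(* A Q-subset (carrier with |.|) together with a Q-relation [qrel]
   from X to X (values in DQ(|x|,|y|)) with id_X <= 1_X and 1_X o 1_X <= 1_X,
   where composition is (psi o phi)(x,z) = \/_y (psi(y,z)/|y|) & phi(x,y). *)
Record QPreord := {
  qpcar :> Type;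
  qdeg : qpcar -> Q;
  qrel : qpcar -> qpcar -> Q;
  qrel_valid : forall x y, inDQ (qrel x y) (qdeg x) (qdeg y);
  qrel_refl : forall x, qle (qdeg x) (qrel x x);
  qrel_trans : forall x z,
      qle (qsup (fun c => exists y, c = qmul (qrdiv (qrel y z) (qdeg y)) (qrel x y)))
          (qrel x z)
}.

(* A potential lower Q-subset: a Q-relation mu from X to 1_q
   (mu x \in DQ(|x|, q)) with mu o 1_X <= mu.  Its extent is |mu| = q. *)
Record PEl (X : QPreord) := {
  pdeg : Q;
  pfun : X -> Q;
  pvalid : forall x, inDQ (pfun x) (qdeg x) pdeg;
  plower : forall x,
      qle (qsup (fun c => exists y, c = qmul (qrdiv (pfun y) (qdeg y)) (qrel x y)))
          (pfun x)
}.

(* 1_{PX}(mu, mu') = mu' <- mu : the largest Q-relation v from 1_{|mu|} to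
   1_{|mu'|} (i.e. v \in DQ(|mu|,|mu'|)) with v o mu <= mu', where
   (v o mu)(x) = (v/|mu|) & mu(x). *)
Definition PXrel (X : QPreord) (m m' : PEl X) : Q :=
  qsup (fun v => inDQ v (pdeg m) (pdeg m') /\
         forall x, qle (qmul (qrdiv v (pdeg m)) (pfun m x)) (pfun m' x)).

Definition PXle (X : QPreord) (m m' : PEl X) : Prop :=
  pdeg m = pdeg m' /\ qle (pdeg m) (PXrel m m').

Definition PQmono (X Y : QPreord) (f : PEl X -> PEl Y) : Prop :=
  (forall m, pdeg (f m) = pdeg m) /\
  (forall m m', qle (PXrel m m') (PXrel (f m) (f m'))).

Definition PQgalois (X Y : QPreord) (f : PEl X -> PEl Y) (g : PEl Y -> PEl X) : Prop :=
  (forall m, qle (pdeg m) (PXrel m (g (f m)))) /\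
  (forall n, qle (pdeg n) (PXrel (f (g n)) n)).

Definition PLeftAdjoint (X Y : QPreord) (f : PEl X -> PEl Y) : Prop :=
  exists g : PEl Y -> PEl X, forall m n, PXle (f m) n <-> PXle m (g n).

Definition ucomp (X : QPreord) (u : Q) (m : PEl X) : X -> Q :=
  fun x => qmul (qrdiv u (pdeg m)) (pfun m x).

Definition yoneda (X : QPreord) (x : X) : PEl X :=
  {| pdeg := qdeg x;
     pfun := fun z => qrel z x;
     pvalid := fun z => qrel_valid z x;
     plower := fun z => qrel_trans z x |}.

End QDefs.

(* Main.v *)
Require Import Defs.
From Stdlib Require Import Setoid.
Set Implicit Arguments.
Unset Strict Implicit.

Section QL.
Variable Q : Quantale.

Local Notation "a ⊑ b" := (@qle Q a b) (at level 70).
Local Notation "a ⊗ b" := (@qmul Q a b) (at level 40, left associativity).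
Local Notation "a // b" := (@qrdiv Q a b) (at level 35).
Local Notation "a \\ b" := (@qldiv Q a b) (at level 35).

Lemma tr (a b c : Q) : a ⊑ b -> b ⊑ c -> a ⊑ c.
Proof. apply qle_trans. Qed.

Lemma sup2 (a b : Q) : a ⊑ b -> qsup (fun z => z = a \/ z = b) = b.
Proof.
  intro H. apply qle_antisym.
  - apply qsup_least. intros z [->| ->]; auto using qle_refl.
  - apply qsup_ub. auto.
Qed.

Lemma monol (a b c : Q) : a ⊑ b -> a ⊗ c ⊑ b ⊗ c.
Proof.
  intro H. rewrite <- (sup2 H). rewrite qmul_supl. apply qsup_ub.
  exists a. auto.
Qed.

Lemma monor (a b c : Q) : a ⊑ b -> c ⊗ a ⊑ c ⊗ b.
Proof.
  intro H. rewrite <- (sup2 H). rewrite qmul_supr. apply qsup_ub.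
  exists a. auto.
Qed.

Lemma mono2 (a b c d : Q) : a ⊑ b -> c ⊑ d -> a ⊗ c ⊑ b ⊗ d.
Proof. intros; eapply tr; [apply monol|apply monor]; eauto. Qed.

Lemma divr_cancel (r q : Q) : (r // q) ⊗ q ⊑ r.
Proof.
  unfold qrdiv. rewrite qmul_supl. apply qsup_least.
  intros c [a [Ha ->]]. exact Ha.
Qed.

Lemma divl_cancel (p r : Q) : p ⊗ (p \\ r) ⊑ r.
Proof.
  unfold qldiv. rewrite qmul_supr. apply qsup_least.
  intros c [a [Ha ->]]. exact Ha.
Qed.

Lemma divr_spec (a q r : Q) : a ⊗ q ⊑ r <-> a ⊑ r // q.
Proof.
  split; intro H.
  - apply qsup_ub. exact H.
  - eapply tr; [apply monol; exact H| apply divr_cancel].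
Qed.

Lemma divl_spec (p a r : Q) : p ⊗ a ⊑ r <-> a ⊑ p \\ r.
Proof.
  split; intro H.
  - apply (@qsup_ub Q (fun q : Q => p ⊗ q ⊑ r)). exact H.
  - eapply tr; [apply monor; exact H| apply divl_cancel].
Qed.

Lemma divr_mono (a b p : Q) : a ⊑ b -> a // p ⊑ b // p.
Proof. intro H. apply divr_spec. eapply tr; [apply divr_cancel|exact H]. Qed.

Lemma divl_mono (a b p : Q) : a ⊑ b -> p \\ a ⊑ p \\ b.
Proof. intro H. apply divl_spec. eapply tr; [apply divl_cancel|exact H]. Qed.

Lemma e_divr (p : Q) : qe Q ⊑ p // p.
Proof. apply divr_spec. rewrite qmul1l. apply qle_refl. Qed.

Lemma DQ_id (p : Q) : inDQ p p p.
Proof.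
  split; apply qle_antisym.
  - apply divr_cancel.
  - rewrite <- (qmul1l p) at 1. apply monol, e_divr.
  - rewrite <- (qmulr1 p) at 1. apply monor. apply divl_spec. rewrite qmulr1. apply qle_refl.
  - apply divl_cancel.
Qed.

Lemma DQ_sup (S : Q -> Prop) (p q : Q) :
  (forall v, S v -> inDQ v p q) -> inDQ (qsup S) p q.
Proof.
  intro H. split; apply qle_antisym.
  - apply divr_cancel.
  - apply qsup_least. intros v Hv. destruct (H v Hv) as [H1 _].
    rewrite <- H1 at 1. apply monol, divr_mono, qsup_ub, Hv.
  - apply qsup_least. intros v Hv. destruct (H v Hv) as [_ H2].
    rewrite H2 at 1. apply monor, divl_mono, qsup_ub, Hv.
  - apply divl_cancel.
Qed.

Lemma comp_alt (a b c w s : Q) : inDQ w b c -> inDQ s a b -> (w // b) ⊗ s = w ⊗ (b \\ s).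
Proof.
  intros [Hw1 _] [_ Hs2]. rewrite Hs2 at 1. rewrite qmulA, Hw1. reflexivity.
Qed.

Lemma comp_DQ (a b c w s : Q) : inDQ w b c -> inDQ s a b -> inDQ ((w // b) ⊗ s) a c.
Proof.
  intros Hw Hs. split; apply qle_antisym.
  - apply divr_cancel.
  - destruct Hs as [Hs1 Hs2]. rewrite <- Hs1 at 1. rewrite qmulA.
    apply monol. apply (proj1 (divr_spec ((w // b) ⊗ (s // a)) a _)). rewrite <- qmulA, Hs1. apply qle_refl.
  - rewrite (comp_alt Hw Hs). destruct Hw as [Hw1 Hw2].
    rewrite Hw2 at 1. rewrite <- qmulA. apply monor. apply (proj1 (divl_spec c ((c \\ w) ⊗ (b \\ s)) _)).
    rewrite qmulA, <- Hw2. apply qle_refl.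
  - apply divl_cancel.
Qed.

Lemma cdiv_mul (t d a c : Q) : inDQ d a c -> (t // c) ⊗ d ⊑ t ⊗ (c \\ d).
Proof.
  intros [_ Hd2]. rewrite Hd2 at 1. rewrite qmulA. apply monol, divr_cancel.
Qed.

End QL.

Section PX.
Variable Q : Quantale.
Variable X : QPreord Q.

Local Notation "a ⊑ b" := (@qle Q a b) (at level 70).
Local Notation "a ⊗ b" := (@qmul Q a b) (at level 40, left associativity).
Local Notation "a // b" := (@qrdiv Q a b) (at level 35).
Local Notation "a \\ b" := (@qldiv Q a b) (at level 35).

Lemma PXrel_DQ (m m' : PEl X) : inDQ (PXrel m m') (pdeg m) (pdeg m').
Proof. apply DQ_sup. intros v [Hv _]. exact Hv. Qed.

Lemma PXrel_cond (m m' : PEl X) x :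
  (PXrel m m' // pdeg m) ⊗ pfun m x ⊑ pfun m' x.
Proof.
  eapply tr. { apply (cdiv_mul _ (pvalid m x)). }
  unfold PXrel at 1. rewrite qmul_supl. apply qsup_least.
  intros c [v [[Hv Hc] ->]].
  rewrite <- (comp_alt Hv (pvalid m x)). apply Hc.
Qed.

Lemma PXrel_le_intro (m m' : PEl X) v :
  inDQ v (pdeg m) (pdeg m') ->
  (forall x, (v // pdeg m) ⊗ pfun m x ⊑ pfun m' x) -> v ⊑ PXrel m m'.
Proof. intros H1 H2. apply qsup_ub. split; assumption. Qed.

Lemma PXrel_le_cond (m m' : PEl X) v x :
  v ⊑ PXrel m m' -> (v // pdeg m) ⊗ pfun m x ⊑ pfun m' x.
Proof. intro H. eapply tr; [apply monol, divr_mono, H| apply PXrel_cond]. Qed.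

Lemma PXle_pt (m m' : PEl X) :
  PXle m m' <-> pdeg m = pdeg m' /\ forall x, pfun m x ⊑ pfun m' x.
Proof.
  split.
  - intros [Hd H]. split; [exact Hd|]. intro x.
    eapply tr; [|apply (PXrel_le_cond x H)].
    rewrite <- (qmul1l (pfun m x)) at 1. apply monol, e_divr.
  - intros [Hd H]. split; [exact Hd|]. apply PXrel_le_intro.
    + rewrite <- Hd. apply DQ_id.
    + intro x. eapply tr; [|apply H]. eapply tr; [apply (cdiv_mul _ (pvalid m x))|].
      apply divl_cancel.
Qed.

Lemma PXle_refl (m : PEl X) : PXle m m.
Proof. apply PXle_pt. split; [reflexivity| intros; apply qle_refl]. Qed.

Lemma PXle_trans (a b c : PEl X) : PXle a b -> PXle b c -> PXle a c.
Proof.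
  intros H1 H2. apply PXle_pt in H1, H2. apply PXle_pt.
  destruct H1 as [d1 H1], H2 as [d2 H2]. split; [congruence|].
  intro x. eapply tr; eauto.
Qed.

Lemma PXrel_pre (a b c : PEl X) : PXle a b -> PXrel b c ⊑ PXrel a c.
Proof.
  intro H. apply PXle_pt in H. destruct H as [Hd H].
  apply qsup_least. intros v [Hv Hc]. apply PXrel_le_intro.
  - rewrite Hd. exact Hv.
  - intro x. eapply tr; [|apply (Hc x)]. rewrite Hd. apply monor, H.
Qed.

Lemma tens_valid (m : PEl X) q u : inDQ u (pdeg m) q ->
  forall x, inDQ (ucomp u m x) (qdeg x) q.
Proof. intros hu x. unfold ucomp. exact (comp_DQ hu (pvalid m x)). Qed.

Lemma tens_lower (m : PEl X) q u (hu : inDQ u (pdeg m) q) :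
  forall x, qsup (fun c => exists y, c = (ucomp u m y // qdeg y) ⊗ qrel x y)
            ⊑ ucomp u m x.
Proof.
  intro x. apply qsup_least. intros c [y ->].
  rewrite (comp_alt (tens_valid hu y) (qrel_valid x y)).
  unfold ucomp. rewrite <- qmulA.
  rewrite <- (comp_alt (pvalid m y) (qrel_valid x y)).
  apply monor. eapply tr; [|apply plower]. apply qsup_ub. exists y. reflexivity.
Qed.

Definition tens (m : PEl X) q u (hu : inDQ u (pdeg m) q) : PEl X :=
  @Build_PEl Q X q (ucomp u m) (tens_valid hu) (tens_lower hu).

End PX.

Lemma mono_PXle (Q : Quantale) (X Y : QPreord Q) (h : PEl X -> PEl Y) a b :
  PQmono h -> PXle a b -> PXle (h a) (h b).
Proof.
  intros [Hd Hr] [Hab Hle]. split.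
  - rewrite !Hd. exact Hab.
  - rewrite Hd. eapply qle_trans; [exact Hle| apply Hr].
Qed.

Section Main.
Variable Q : Quantale.
Variables X Y : QPreord Q.
Variable f : PEl X -> PEl Y.
Hypothesis hf : PQmono f.

Local Notation "a ⊑ b" := (@qle Q a b) (at level 70).
Local Notation "a ⊗ b" := (@qmul Q a b) (at level 40, left associativity).
Local Notation "a // b" := (@qrdiv Q a b) (at level 35).
Local Notation "a \\ b" := (@qldiv Q a b) (at level 35).

Lemma i_ii : (exists g : PEl Y -> PEl X, PQmono g /\ PQgalois f g) ->
   (PLeftAdjoint f /\
    forall (m : PEl X) (q u : Q), inDQ u (pdeg m) q ->
      forall hv hl,
        forall y, pfun (f (@Build_PEl Q X q (ucomp u m) hv hl)) y
                  = ucomp u (f m) y).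
Proof.
  intros [g [Hg [Hu Hc]]].
  assert (unit : forall m, PXle m (g (f m))).
  { intro m. split; [|apply Hu]. destruct Hg as [Hgd _]. destruct hf as [Hfd _].
    rewrite Hgd, Hfd. reflexivity. }
  assert (counit : forall n, PXle (f (g n)) n).
  { intro n. destruct Hg as [Hgd _]. destruct hf as [Hfd _].
    assert (e : pdeg (f (g n)) = pdeg n) by (rewrite Hfd, Hgd; reflexivity).
    split; [exact e| rewrite e; apply Hc]. }
  assert (adj : forall m n, PXle (f m) n <-> PXle m (g n)).
  { intros m n. split; intro H.
    - eapply PXle_trans; [apply unit| apply (mono_PXle Hg H)].
    - eapply PXle_trans; [apply (mono_PXle hf H)| apply counit]. }
  split; [exists g; exact adj|].
  intros m q u hu hv hl y.
  set (T := @Build_PEl Q X q (ucomp u m) hv hl).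
  assert (hu' : inDQ u (pdeg (f m)) q) by (destruct hf as [Hfd _]; rewrite Hfd; exact hu).
  set (U := tens hu').
  apply qle_antisym.
  - assert (H : PXle (f T) U).
    { apply adj. apply PXle_pt. split.
      + destruct Hg as [Hgd _]. rewrite Hgd. reflexivity.
      + intro x. apply (PXrel_le_cond (m := m) (m' := g U) (v := u) x).
        eapply qle_trans; [|apply (PXrel_pre _ (unit m))].
        eapply qle_trans; [|apply (proj2 Hg)].
        apply PXrel_le_intro; [exact hu'|]. intro z. apply qle_refl. }
    apply PXle_pt in H. apply (proj2 H).
  - unfold ucomp. apply PXrel_le_cond.
    eapply qle_trans; [|apply (proj2 hf)].
    apply PXrel_le_intro; [exact hu|]. intro z. apply qle_refl.
Qed.

Lemma ii_iii :
   (PLeftAdjoint f /\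
    forall (m : PEl X) (q u : Q), inDQ u (pdeg m) q ->
      forall hv hl,
        forall y, pfun (f (@Build_PEl Q X q (ucomp u m) hv hl)) y
                  = ucomp u (f m) y) ->
   (PLeftAdjoint f /\
    forall (x : X) (q u : Q), inDQ u (qdeg x) q ->
      forall hv hl,
        forall y, pfun (f (@Build_PEl Q X q (ucomp u (yoneda x)) hv hl)) y
                  = ucomp u (f (yoneda x)) y).
Proof.
  intros [H1 H2]. split; [exact H1|]. intros x q u hu. exact (H2 (yoneda x) q u hu).
Qed.

Lemma iii_i :
   (PLeftAdjoint f /\
    forall (x : X) (q u : Q), inDQ u (qdeg x) q ->
      forall hv hl,
        forall y, pfun (f (@Build_PEl Q X q (ucomp u (yoneda x)) hv hl)) y
                  = ucomp u (f (yoneda x)) y) ->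
   (exists g : PEl Y -> PEl X, PQmono g /\ PQgalois f g).
Proof.
  intros [[g adj] H3]. destruct hf as [Hfd Hfr].
  assert (counit : forall n, PXle (f (g n)) n) by (intro n; apply adj, PXle_refl).
  assert (unit : forall m, PXle m (g (f m))) by (intro m; apply adj, PXle_refl).
  assert (Hgd : forall n, pdeg (g n) = pdeg n).
  { intro n. rewrite <- (proj1 (counit n)), Hfd. reflexivity. }
  exists g. split; [split|split].
  - exact Hgd.
  - intros n n'. set (w := PXrel n n').
    assert (hw : inDQ w (pdeg (g n)) (pdeg (g n'))) by (rewrite !Hgd; apply PXrel_DQ).
    apply PXrel_le_intro; [exact hw|]. intro x.
    set (s := pfun (g n) x).
    assert (hs : inDQ s (qdeg x) (pdeg (g n))) by apply pvalid.
    set (A := tens (m := yoneda x) hs).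
    assert (HA : PXle A (g n)).
    { apply PXle_pt. split; [reflexivity|]. intro z. simpl. unfold ucomp; simpl.
      eapply qle_trans; [|apply plower]. apply qsup_ub. exists x. reflexivity. }
    apply adj, PXle_pt in HA. destruct HA as [_ HA].
    set (t := (w // pdeg (g n)) ⊗ s).
    assert (ht : inDQ t (qdeg x) (pdeg (g n'))) by exact (comp_DQ hw hs).
    set (B := tens (m := yoneda x) ht).
    assert (HB : PXle B (g n')).
    { apply adj. apply PXle_pt. split.
      - rewrite Hfd. simpl. apply Hgd.
      - intro y. unfold B, tens. rewrite (H3 x _ t ht). unfold ucomp.
        assert (hc : pdeg (f (yoneda x)) = qdeg x) by apply Hfd.
        assert (hd : inDQ (pfun (f (yoneda x)) y) (qdeg y) (qdeg x))
          by (rewrite <- hc; apply pvalid).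
        rewrite hc.
        eapply qle_trans; [apply (cdiv_mul _ hd)|].
        unfold t. rewrite <- qmulA.
        rewrite <- (comp_alt hs hd).
        eapply qle_trans; [apply monor|].
        { pose proof (HA y) as HAy. unfold A, tens in HAy. rewrite (H3 x _ s hs) in HAy. unfold ucomp in HAy.
          rewrite hc in HAy. exact HAy. }
        rewrite Hgd. apply PXrel_cond. }
    apply PXle_pt in HB. destruct HB as [_ HB].
    eapply qle_trans; [|apply (HB x)]. simpl. unfold ucomp. simpl.
    pose proof ht as [ht1 _]. rewrite <- ht1 at 1. apply monor, qrel_refl.
  - intro m. apply (proj2 (unit m)).
  - intro n. rewrite <- (proj1 (counit n)). apply (proj2 (counit n)).
Qed.

End Main.

Theorem proposition4p15 (Q : Quantale) (X Y : QPreord Q)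
    (f : PEl X -> PEl Y) (hf : PQmono f) :
  ((exists g : PEl Y -> PEl X, PQmono g /\ PQgalois f g) <->
   (PLeftAdjoint f /\
    forall (m : PEl X) (q u : Q), inDQ u (pdeg m) q ->
      forall hv hl,
        forall y, pfun (f (@Build_PEl Q X q (ucomp u m) hv hl)) y
                  = ucomp u (f m) y)) /\
  ((exists g : PEl Y -> PEl X, PQmono g /\ PQgalois f g) <->
   (PLeftAdjoint f /\
    forall (x : X) (q u : Q), inDQ u (qdeg x) q ->
      forall hv hl,
        forall y, pfun (f (@Build_PEl Q X q (ucomp u (yoneda x)) hv hl)) y
                  = ucomp u (f (yoneda x)) y)).
Proof.
  split; split; intro H.
  - exact (i_ii hf H).
  - exact (iii_i hf (ii_iii H)).
  - exact (ii_iii (i_ii hf H)).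
  - exact (iii_i hf H).
Qed.
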